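(* Let $V$ be a finite-dimensional real vector space and $2\le p\le\dim V$. The following assignment is a one-to-one correspondence between linear Dirac structures $(P,\Omega)$ of order $p$ on $V$ relative to $\mathbb R$ and pairs $(S,\Pi)$ consisting of a subspace $S\subset V^*$ and a $p$-vector $\Pi\in\Lambda^pS^*$ satisfying condition (H'): to $(P,\Omega)$ associate $L^\perp=\{(Z,\eta)\in\Lambda^{p-1}V\times V^*: Z\in\Lambda^{p-1}P,\ i_Z\Omega=\eta|_P\}$, $S=\{\eta\in V^*:\exists Z,\ (Z,\eta)\in L^\perp\}$, and $\Pi\in\Lambda^pS^*$ (with $S^*$ identified with $V/\mathrm{Ann}(S)$) defined by $\Pi(\eta)=Z|_{\Lambda^{p-1}S}$ for $(Z,\eta)\in L^\perp$ (this is well defined and skew-symmetric).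
   Context: A linear Dirac structure of order $p$ on $V$ relative to $\mathbb R$ is a pair $(P,\Omega)$ where $P\subset V$ is a subspace and $\Omega\in\Lambda^pP^*$, satisfying condition (H): for all $Z_1,\dots,Z_{p-1}\in\Lambda^{p-1}P$ there exists $v\in P$ with $(i_{Z_1}\Omega)\wedge\dots\wedge(i_{Z_{p-1}}\Omega)=i_v\Omega$, where $(i_v\Omega)(Z)=\Omega(v\wedge Z)$ and $(i_Z\Omega)(w)=\Omega(Z\wedge w)$. For $\Pi\in\Lambda^pS^*$ and $\omega\in\Lambda^kS$, $\Pi(\omega)\in\Lambda^{p-k}S^*$ denotes the contraction $\langle\Pi(\omega),\xi\rangle=\Pi(\omega\wedge\xi)$. Condition (H'): for all $\omega_1,\dots,\omega_{p-1}\in\Lambda^{p-1}S$ there exists $\eta\in S$ with $\Pi(\omega_1)\wedge\dots\wedge\Pi(\omega_{p-1})=\Pi(\eta)$. *)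

(* Defs.v *)
(* V = R^n realised as row vectors 'rV[R]_n; V^* realised as
   'rV[R]_n via the standard pairing dpair.  Exterior algebra is encoded
   concretely: k-forms are functions on lists of vectors (only lists of
   length k with entries in the relevant subspace matter), and k-vectors are
   finite formal linear combinations of wedges of k vectors. *)
From HB Require Import structures.
From mathcomp Require Import all_boot all_order all_algebra.
From mathcomp Require Import reals.
Set Implicit Arguments. Unset Strict Implicit. Unset Printing Implicit Defensive.
Import Order.TTheory GRing.Theory Num.Theory.
Local Open Scope ring_scope.

Section Dirac.
Variables (R : realType) (n : nat).
Notation V := 'rV[R]_n.

Definition dpair (xi v : V) : R := \sum_(i < n) xi ord0 i * v ord0 i.

Definition in_sub (U : {vspace V}) (vs : seq V) : bool :=
  all (fun v => v \in U) vs.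

Definition multilinear_on (U : {vspace V}) (k : nat) (F : seq V -> R) : Prop :=
  forall (l r : seq V) (a : R) (u w : V),
    (size l + size r).+1 = k -> in_sub U l -> in_sub U r ->
    u \in U -> w \in U ->
    F (l ++ (a *: u + w) :: r) = a * F (l ++ u :: r) + F (l ++ w :: r).

Definition alternating_on (U : {vspace V}) (k : nat) (F : seq V -> R) : Prop :=
  forall vs : seq V, size vs = k -> in_sub U vs ->
    forall i j : nat, (i < j < k)%N -> nth 0 vs i = nth 0 vs j -> F vs = 0.

Definition kform_on (U : {vspace V}) (k : nat) (F : seq V -> R) : Prop :=
  multilinear_on U k F /\ alternating_on U k F.

Definition eq_on (U : {vspace V}) (k : nat) (F G : seq V -> R) : Prop :=
  forall vs : seq V, size vs = k -> in_sub U vs -> F vs = G vs.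

(* a k-vector in Lambda^k U : sum_c c.1 * (c.2)_1 /\ ... /\ (c.2)_k *)
Definition mvec := seq (R * seq V).
Definition mvec_in (U : {vspace V}) (k : nat) (Z : mvec) : bool :=
  all (fun c => (size c.2 == k) && in_sub U c.2) Z.

(* contraction: for Z a k-vector and F a (k+1)-form,
   contr Z F x = F(Z /\ x)  (i.e. (i_Z F)(x), resp. <F(Z), x>) *)
Definition contr (Z : mvec) (F : seq V -> R) (x : V) : R :=
  \sum_(c <- Z) c.1 * F (rcons c.2 x).

Definition wedge1 (k : nat) (alphas : seq (V -> R)) (us : seq V) : R :=
  \det (\matrix_(a < k, b < k) (nth (fun _ => 0) alphas a) (nth 0 us b)).

(* pairing <Z, xi_1 /\ ... /\ xi_k> of a k-vector on V with k covectors *)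
Definition mpair (k : nat) (Z : mvec) (xs : seq V) : R :=
  \sum_(c <- Z) c.1 * wedge1 k (map dpair xs) c.2.

Definition condH (p : nat) (P : {vspace V}) (Om : seq V -> R) : Prop :=
  forall Zs : seq mvec, size Zs = p.-1 -> all (mvec_in P p.-1) Zs ->
    exists v : V, v \in P /\
      forall us : seq V, size us = p.-1 -> in_sub P us ->
        wedge1 p.-1 (map (fun Z => contr Z Om) Zs) us = Om (v :: us).

(* condition (H')  -- S is a subspace of dual V, Pi in Lambda^p (dual S) *)
Definition condH' (p : nat) (S : {vspace V}) (Pi : seq V -> R) : Prop :=
  forall ws : seq mvec, size ws = p.-1 -> all (mvec_in S p.-1) ws ->
    exists eta : V, eta \in S /\
      forall xs : seq V, size xs = p.-1 -> in_sub S xs ->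
        wedge1 p.-1 (map (fun w => contr w Pi) ws) xs = Pi (eta :: xs).

Definition linear_dirac (p : nat) (P : {vspace V}) (Om : seq V -> R) : Prop :=
  kform_on P p Om /\ condH p P Om.

Definition dual_pair (p : nat) (S : {vspace V}) (Pi : seq V -> R) : Prop :=
  kform_on S p Pi /\ condH' p S Pi.

Definition in_Lperp (p : nat) (P : {vspace V}) (Om : seq V -> R)
    (Z : mvec) (eta : V) : Prop :=
  mvec_in P p.-1 Z /\ forall w : V, w \in P -> contr Z Om w = dpair eta w.

Definition assoc (p : nat) (P : {vspace V}) (Om : seq V -> R)
    (S : {vspace V}) (Pi : seq V -> R) : Prop :=
  (forall eta : V, eta \in S <-> exists Z : mvec, in_Lperp p P Om Z eta) /\
  (forall (Z : mvec) (eta : V), in_Lperp p P Om Z eta ->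
     forall xs : seq V, size xs = p.-1 -> in_sub S xs ->
       Pi (eta :: xs) = mpair p.-1 Z xs).

End Dirac.

(* Main.v *)
Require Import Defs.
From HB Require Import structures.
From mathcomp Require Import all_boot all_order all_algebra.
From mathcomp Require Import reals.
From Stdlib Require Import Classical_Prop Lia.
From mathcomp Require Import zify ring.
Set Implicit Arguments. Unset Strict Implicit. Unset Printing Implicit Defensive.
Import Order.TTheory GRing.Theory Num.Theory.
Local Open Scope ring_scope.


Section Basics.
Variables (R : realType) (n : nat).
Local Notation V := 'rV[R]_n.

Lemma dpairC (x y : V) : dpair x y = dpair y x.
Proof. by apply: eq_bigr => i _; rewrite mulrC. Qed.

Lemma dpairDl (a : R) (u w x : V) : dpair (a *: u + w) x = a * dpair u x + dpair w x.
Proof.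
rewrite /dpair mulr_sumr -big_split /=; apply: eq_bigr => i _.
by rewrite !mxE mulrDl mulrA.
Qed.

Lemma dpairDr (a : R) (u w x : V) : dpair x (a *: u + w) = a * dpair x u + dpair x w.
Proof. by rewrite dpairC dpairDl !(dpairC x). Qed.

Lemma dpair0l (x : V) : dpair 0 x = 0.
Proof. by rewrite /dpair big1 // => i _; rewrite mxE mul0r. Qed.

Lemma dpair0r (x : V) : dpair x 0 = 0.
Proof. by rewrite dpairC dpair0l. Qed.

Lemma lin_facts (g : V -> R) :
  (forall a u w, g (a *: u + w) = a * g u + g w) ->
  [/\ g 0 = 0, forall u w, g (u + w) = g u + g w & forall a u, g (a *: u) = a * g u].
Proof.
move=> H.
have g0 : g 0 = 0.
  by have := H (-1) 0 0; rewrite scaler0 addr0 mulN1r addNr.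
split=> //.
  by move=> u w; rewrite -[u]scale1r H mul1r scale1r.
by move=> a u; rewrite -[a *: u]addr0 H g0 addr0.
Qed.

Lemma lin_sum (g : V -> R) (I : Type) (r : seq I) (c : I -> R) (e : I -> V) :
  (forall a u w, g (a *: u + w) = a * g u + g w) ->
  g (\sum_(i <- r) c i *: e i) = \sum_(i <- r) c i * g (e i).
Proof.
move=> H; have [g0 gD gZ] := lin_facts H.
elim: r => [|i r IH]; first by rewrite !big_nil.
by rewrite !big_cons gD gZ IH.
Qed.

Lemma REP (g : V -> R) :
  (forall a u w, g (a *: u + w) = a * g u + g w) ->
  exists xi : V, forall w, dpair xi w = g w.
Proof.
move=> H; exists (\row_i g (delta_mx 0 i)) => w.
rewrite {2}(row_sum_delta w).
have -> : \sum_(j < n) w 0 j *: delta_mx 0 j = \sum_(j <- index_enum 'I_n) w 0 j *: delta_mx 0 j :> V.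
  by [].
rewrite lin_sum //; apply: eq_bigr => i _; by rewrite mxE mulrC.
Qed.

Lemma EXT (U : {vspace V}) (f : V -> R) :
  (forall a u w, u \in U -> w \in U -> f (a *: u + w) = a * f u + f w) ->
  exists xi : V, forall w, w \in U -> dpair xi w = f w.
Proof.
move=> H.
have [xi Hxi] : exists xi : V, forall w, dpair xi w = f (projv U w).
  apply: REP => a u w; rewrite linearP /=; apply: H; exact: memv_proj.
by exists xi => w wU; rewrite Hxi projv_id.
Qed.

Lemma DA (U : {vspace V}) (x : V) :
  (forall xi : V, (forall w, w \in U -> dpair xi w = 0) -> dpair xi x = 0) ->
  x \in U.
Proof.
move=> H; set y := x - projv U x.
have [y0|] := eqVneq y 0.
  by have := memv_proj U x; move/eqP: y0; rewrite subr_eq0 => /eqP <-.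
move=> /eqP yn0.
have [i yi] : exists i, y 0 i != 0.
  case: (pickP (fun i => y 0 i != 0)) => [i yi|Hy].
    by exists i.
  exfalso; apply: yn0; apply/rowP => j; rewrite [RHS]mxE; move: (Hy j) => /=; by case: eqP.
have [xi Hxi] : exists xi : V, forall w, dpair xi w = (w - projv U w) 0 i.
  apply: REP => a u w; rewrite linearP /= !mxE.
  by rewrite opprD addrACA -mulrBr.
move: (H xi); rewrite Hxi -/y => Hy; move: yi; rewrite Hy ?eqxx //.
by move=> w wU; rewrite Hxi projv_id // subrr mxE.
Qed.

End Basics.


Section Forms.
Variables (R : realType) (n : nat).
Local Notation V := 'rV[R]_n.

Lemma dimrV : dim 'rV[R]_n = n.
Proof. rewrite dim_matrix; exact: mul1n. Qed.

Lemma VSP (Q : V -> Prop) : Q 0 -> (forall a u w, Q u -> Q w -> Q (a *: u + w)) ->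
  exists U : {vspace V}, forall x, x \in U <-> Q x.
Proof.
move=> Q0 QC.
suff H : forall m (U : {vspace V}), (forall x, x \in U -> Q x) ->
    (n - \dim U <= m)%N -> exists W : {vspace V}, forall x, x \in W <-> Q x.
  apply: (H n 0%VS) => [x|]; last by rewrite leq_subr.
  by rewrite memv0 => /eqP ->.
elim=> [|m IH] U HU Hd.
  exists U => x; split; first exact: HU.
  move=> Qx; apply/negPn/negP => xU.
  have dimU : \dim U = n.
    have := dimvS (subvf U); rewrite dimvf dimrV; lia.
  have /eqP UF : U == fullv by rewrite eqEdim subvf dimvf dimrV dimU leqnn.
  by move: xU; rewrite UF memvf.
have [[x [Qx xU]]|Hno] := classic (exists x, Q x /\ x \notin U); last first.
  exists U => y; split; first exact: HU.
  move=> Qy; apply/negPn/negP => yU; apply: Hno; by exists y.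
pose U' := (U + <[x]>)%VS.
have HU' : forall y, y \in U' -> Q y.
  move=> y /memv_addP [u uU [v /vlineP [k ->] ->]].
  rewrite addrC -[u]scale1r; apply: QC; first exact: Qx.
  by rewrite scale1r; apply: HU.
apply: (IH U') => //.
have sUU' : (U <= U')%VS by apply: addvSl.
have neq : U != U'.
  apply/eqP => E; move: xU; rewrite E; apply/negP/negPn.
  by apply: subvP (addvSr U <[x]>) _ (memv_line x).
have lt : (\dim U < \dim U')%N.
  by rewrite (ltn_leqif (dimv_leqif_eq sUU')) neq.
have le : (\dim U' <= n)%N by have := dimvS (subvf U'); rewrite dimvf dimrV.
lia.
Qed.

Section FormLemmas.
Variables (U : {vspace V}) (N : nat) (F : seq V -> R).
Hypothesis HF : kform_on U N F.

Lemma in_sub_cat (l r : seq V) : in_sub U (l ++ r) = in_sub U l && in_sub U r.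
Proof. exact: all_cat. Qed.
Lemma in_sub_cons (a : V) (l : seq V) : in_sub U (a :: l) = (a \in U) && in_sub U l.
Proof. by []. Qed.
Lemma in_sub_rcons (a : V) (l : seq V) : in_sub U (rcons l a) = (a \in U) && in_sub U l.
Proof. exact: all_rcons. Qed.

Lemma FM (l r : seq V) (a : R) (u w : V) : (size l + size r).+1 = N -> in_sub U l -> in_sub U r -> u \in U -> w \in U ->
  F (l ++ (a *: u + w) :: r) = a * F (l ++ u :: r) + F (l ++ w :: r).
Proof. move=> h1 h2 h3 h4 h5; exact: (HF.1 l r a u w h1 h2 h3 h4 h5). Qed.

Lemma F0 (l r : seq V) : (size l + size r).+1 = N -> in_sub U l -> in_sub U r -> F (l ++ 0 :: r) = 0.
Proof.
move=> s Hl Hr; have := HF.1 l r (-1) 0 0 s Hl Hr (mem0v U) (mem0v U).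
by rewrite scaler0 addr0 mulN1r addNr.
Qed.

Lemma FD (l r : seq V) (u w : V) : (size l + size r).+1 = N -> in_sub U l -> in_sub U r -> u \in U -> w \in U ->
  F (l ++ (u + w) :: r) = F (l ++ u :: r) + F (l ++ w :: r).
Proof. by move=> h1 h2 h3 h4 h5; rewrite -{1}[u]scale1r FM // mul1r. Qed.

Lemma FZ (l r : seq V) (a : R) (u : V) : (size l + size r).+1 = N -> in_sub U l -> in_sub U r -> u \in U ->
  F (l ++ (a *: u) :: r) = a * F (l ++ u :: r).
Proof. by move=> h1 h2 h3 h4; rewrite -[a *: u]addr0 FM ?mem0v // F0 // addr0. Qed.

Lemma Falt2 (l r : seq V) (x : V) : (size l + size r).+2 = N -> in_sub U l -> in_sub U r -> x \in U ->
  F (l ++ x :: x :: r) = 0.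
Proof.
move=> s Hl Hr xU.
have H2 : forall vs, size vs = N -> in_sub U vs -> forall i j : nat, (i < j < N)%N -> nth 0 vs i = nth 0 vs j -> F vs = 0.
  by move=> vs h1 h2 i j h3 h4; exact: (HF.2 vs h1 h2 i j h3 h4).
apply: (H2 _ _ _ (size l) (size l).+1).
- rewrite size_cat /=; lia.
- by rewrite in_sub_cat Hl !in_sub_cons xU Hr.
- apply/andP; split=> //; lia.
- by rewrite !nth_cat ltnn subnn /= ltnNge leqnSn /= subSnn.
Qed.

Lemma Fswap (l r : seq V) (a b : V) : (size l + size r).+2 = N -> in_sub U l -> in_sub U r -> a \in U -> b \in U ->
  F (l ++ a :: b :: r) = - F (l ++ b :: a :: r).
Proof.
move=> s Hl Hr aU bU.
have abU : ((a + b : V) \in U) by rewrite memvD.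
have s1 : (size l + size (a + b :: r)).+1 = N by rewrite /= addnS.
have s2 : forall x, (size (rcons l x) + size r).+1 = N by move=> x; rewrite size_rcons addSn.
have := Falt2 s Hl Hr abU.
rewrite (@FD l ((a+b)::r) a b) //; last by rewrite in_sub_cons abU Hr.
rewrite -[l ++ a :: (a + b) :: r]cat_rcons -[l ++ b :: (a+b)::r]cat_rcons (@FD (rcons l a) r a b) ?s2 ?in_sub_rcons ?aU ?bU ?Hl //.
rewrite (@FD (rcons l b) r a b) ?s2 ?in_sub_rcons ?aU ?bU ?Hl //.
rewrite !cat_rcons !Falt2 // add0r addr0 => /eqP; rewrite addr_eq0 => /eqP //.
Qed.

Lemma Ffront (l : seq V) (a : V) (r : seq V) : (size l + size r).+1 = N -> in_sub U l -> a \in U -> in_sub U r ->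
  F (l ++ a :: r) = (-1) ^+ (size l) * F (a :: l ++ r).
Proof.
elim/last_ind: l r => [|l x IH] r s Hl aU Hr; first by rewrite expr0 mul1r.
move: Hl; rewrite in_sub_rcons => /andP [xU Hl].
rewrite size_rcons in s.
have s' : (size l + size r).+2 = N by lia.
have s'' : (size l + size (x :: r)).+1 = N by rewrite /=; lia.
have xr : in_sub U (x :: r) by rewrite in_sub_cons xU Hr.
rewrite cat_rcons (@Fswap l r x a s' Hl Hr xU aU) (IH (x :: r) s'' Hl aU xr).
by rewrite cat_rcons size_rcons exprS mulN1r mulNr.
Qed.

Lemma Frot (l : seq V) (a : V) : (size l).+1 = N -> in_sub U l -> a \in U ->
  F (rcons l a) = (-1) ^+ (size l) * F (a :: l).
Proof. by move=> s Hl aU; rewrite -cats1 Ffront ?cats0 // addn0. Qed.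

Lemma Fsum0 (I : eqType) (s : seq I) (c : I -> R) (e : I -> V) (r : seq V) :
  (size r).+1 = N -> in_sub U r -> (forall i, i \in s -> e i \in U) ->
  F ((\sum_(i <- s) c i *: e i) :: r) = \sum_(i <- s) c i * F (e i :: r).
Proof.
move=> sz Hr; elim: s => [|i s IH] He.
  by rewrite !big_nil (F0 (l := [::])).
have eU : e i \in U by apply: He; rewrite mem_head.
have sU : \sum_(j <- s) c j *: e j \in U.
  rewrite big_seq; apply: memv_suml => j js; apply: memvZ; apply: He.
  by rewrite inE js orbT.
rewrite !big_cons (@FM [::] r) //= IH // => j js; apply: He; by rewrite inE js orbT.
Qed.

End FormLemmas.

Lemma nth_drop_nth (s : seq V) j i :
  nth 0 (take j s ++ drop j.+1 s) i = nth 0 s (bump j i).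
Proof.
rewrite /bump nth_cat size_take.
case: (ltnP j (size s)) => hj.
  case: (ltnP i j) => hij.
    by rewrite nth_take // add0n.
  rewrite nth_drop /=; congr nth; lia.
rewrite take_oversize // drop_oversize ?nth_nil; last by lia.
case: (ltnP i (size s)) => his.
  by have -> : (j <= i)%N = false by apply/negbTE; rewrite -ltnNge; lia.
by rewrite [RHS]nth_default // (leq_trans his) // leq_addl.
Qed.

Lemma wedge_laplace k (f : V -> R) (fs : seq (V -> R)) (us : seq V) :
  wedge1 k.+1 (f :: fs) us =
  \sum_(j < k.+1) (-1) ^+ j * f (nth 0 us j) * wedge1 k fs (take j us ++ drop j.+1 us).
Proof.
rewrite /wedge1 (expand_det_row _ ord0); apply: eq_bigr => j _.
rewrite !mxE /cofactor add0n /= mulrCA mulrA; congr (_ * \det _).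
by apply/matrixP => a b; rewrite !mxE lift0 /= nth_drop_nth.
Qed.

Lemma wedge_lin k (fs1 fs2 : seq (V -> R)) (f g h : V -> R) (a : R) us :
  (size fs1 < k)%N -> (forall x, h x = a * f x + g x) ->
  wedge1 k (fs1 ++ h :: fs2) us = a * wedge1 k (fs1 ++ f :: fs2) us + wedge1 k (fs1 ++ g :: fs2) us.
Proof.
move=> sk Hh; rewrite /wedge1 -[X in _ = _ + X]mul1r; apply: (determinant_multilinear (i0 := Ordinal sk)).
- apply/rowP => b; rewrite !mxE /= !nth_cat ltnn subnn /= Hh mul1r //.
- apply/matrixP => a' b; rewrite !mxE !nth_cat.
  case: ltnP => // hl.
  have hne : (lift (Ordinal sk) a' : nat) != size fs1 by rewrite /= eq_sym neq_bump.
  case E: (_ - size fs1)%N => [|m] //.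
  by move: hne; rewrite eqn_leq hl andbT -subn_eq0 E.
- apply/matrixP => a' b; rewrite !mxE !nth_cat.
  case: ltnP => // hl.
  have hne : (lift (Ordinal sk) a' : nat) != size fs1 by rewrite /= eq_sym neq_bump.
  case E: (_ - size fs1)%N => [|m] //.
  by move: hne; rewrite eqn_leq hl andbT -subn_eq0 E.
Qed.

Lemma wedge_alt k (fs : seq (V -> R)) us (i j : 'I_k) :
  i != j -> (forall x, nth (fun _ => 0) fs i x = nth (fun _ => 0) fs j x) -> wedge1 k fs us = 0.
Proof. by move=> ij H; apply: (determinant_alternate ij) => b; rewrite !mxE H. Qed.

Lemma nth_map_dpair (xs : seq V) a y :
  nth (fun _ => 0) (map (@dpair R n) xs) a y = dpair (nth 0 xs a) y.
Proof.
case: (ltnP a (size xs)) => h; first by rewrite (nth_map 0).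
by rewrite !nth_default ?size_map // dpair0l.
Qed.

Lemma wedge_tr k (xs ys : seq V) : wedge1 k (map (@dpair R n) xs) ys = wedge1 k (map (@dpair R n) ys) xs.
Proof.
rewrite /wedge1 -det_tr; congr (\det _); apply/matrixP => a b.
by rewrite !mxE !nth_map_dpair dpairC.
Qed.

Lemma wedge_congr k (fs gs : seq (V -> R)) (us : seq V) :
  (forall a b, (a < k)%N -> (b < k)%N -> nth (fun _ => 0) fs a (nth 0 us b) = nth (fun _ => 0) gs a (nth 0 us b)) ->
  wedge1 k fs us = wedge1 k gs us.
Proof. by move=> H; rewrite /wedge1; congr (\det _); apply/matrixP => a b; rewrite !mxE H. Qed.

Lemma wedge0 (fs : seq (V -> R)) (us : seq V) : wedge1 0 fs us = 1.
Proof. exact: det_mx00. Qed.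

End Forms.


Arguments F0 {R n U N F} HF l r.
Arguments FM {R n U N F} HF l r a u w.
Arguments FD {R n U N F} HF l r u w.
Arguments FZ {R n U N F} HF l r a u.
Arguments Falt2 {R n U N F} HF l r x.
Arguments Fswap {R n U N F} HF l r a b.
Arguments Ffront {R n U N F} HF l a r.
Arguments Frot {R n U N F} HF l a.
Arguments Fsum0 {R n U N F} HF {I} s c e r.

Section Helpers.
Variables (R : realType) (n : nat).
Local Notation V := 'rV[R]_n.

Lemma in_sub_nth (U : {vspace V}) (l : seq V) i : in_sub U l -> (i < size l)%N -> nth 0 l i \in U.
Proof. by move=> H hi; apply: (allP H); rewrite mem_nth. Qed.

Lemma in_sub_dn (U : {vspace V}) (l : seq V) j : in_sub U l -> in_sub U (take j l ++ drop j.+1 l).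
Proof.
move=> H; rewrite /in_sub all_cat; apply/andP; split; apply/allP => x hx; apply: (allP H).
  exact: mem_take hx.
exact: mem_drop hx.
Qed.

Lemma size_dn (l : seq V) j : (j < size l)%N -> size (take j l ++ drop j.+1 l) = (size l).-1.
Proof. by move=> h; rewrite size_cat size_take h size_drop; lia. Qed.

Lemma sign_sq k : (-1) ^+ k * (-1) ^+ k = 1 :> R.
Proof. by rewrite -exprMn mulrNN mulr1 expr1n. Qed.

Lemma contr_cat (Z1 Z2 : seq (R * seq V)) F x : contr (Z1 ++ Z2) F x = contr Z1 F x + contr Z2 F x.
Proof. by rewrite /contr big_cat. Qed.

Lemma contr_scale (Z : seq (R * seq V)) a F x :
  contr [seq (a * c.1, c.2) | c <- Z] F x = a * contr Z F x.
Proof. by rewrite /contr big_map mulr_sumr; apply: eq_bigr => c _; rewrite mulrA. Qed.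

Lemma mpair_cat k (Z1 Z2 : seq (R * seq V)) xs : mpair k (Z1 ++ Z2) xs = mpair k Z1 xs + mpair k Z2 xs.
Proof. by rewrite /mpair big_cat. Qed.

Lemma mpair_scale k (Z : seq (R * seq V)) a xs :
  mpair k [seq (a * c.1, c.2) | c <- Z] xs = a * mpair k Z xs.
Proof. by rewrite /mpair big_map mulr_sumr; apply: eq_bigr => c _; rewrite mulrA. Qed.

Lemma mvec_in_cat (U : {vspace V}) k (Z1 Z2 : seq (R * seq V)) :
  mvec_in U k (Z1 ++ Z2) = mvec_in U k Z1 && mvec_in U k Z2.
Proof. exact: all_cat. Qed.

Lemma mvec_in_scale (U : {vspace V}) k (Z : seq (R * seq V)) a :
  mvec_in U k [seq (a * c.1, c.2) | c <- Z] = mvec_in U k Z.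
Proof. by rewrite /mvec_in all_map. Qed.

Lemma kform_eq (U : {vspace V}) N (F G : seq V -> R) :
  kform_on U N F -> eq_on U N F G -> kform_on U N G.
Proof.
move=> [HM HA] E; split.
  move=> l r a u w s Hl Hr uU wU.
  have sz : forall x, size (l ++ x :: r) = N by move=> x; rewrite size_cat /=; lia.
  have ins : forall x, x \in U -> in_sub U (l ++ x :: r) by move=> x xU; rewrite in_sub_cat Hl in_sub_cons xU Hr.
  rewrite -!E ?sz ?ins ?memvD ?memvZ //; exact: HM.
move=> vs s Hv i j ij e; rewrite -E //; exact: (HA vs s Hv i j ij e).
Qed.

Lemma kform_shift (U : {vspace V}) m (G : seq V -> R) x :
  kform_on U m.+1 G -> x \in U -> kform_on U m (fun l => G (x :: l)).
Proof.
move=> [HM HA] xU; split.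
  move=> l r a u w s Hl Hr uU wU; apply: (HM (x :: l)) => //=; first lia.
  by move: Hl; rewrite /in_sub /= xU.
move=> vs s Hv i j /andP [ij jm] e; apply: (HA (x :: vs) _ _ i.+1 j.+1) => //=.
- by rewrite s.
- by move: Hv; rewrite /in_sub /= xU.
- by rewrite ltnS ij ltnS jm.
Qed.

End Helpers.



Section Main.
Variables (R : realType) (n k : nat).
Local Notation V := 'rV[R]_n.
Local Notation mv := (seq (R * seq V)).
Variables (P : {vspace V}) (Om : seq V -> R).
Hypothesis HOm : kform_on P k.+1 Om.
Hypothesis HH : condH k.+1 P Om.

Lemma contr_lin (Z : mv) a u w : mvec_in P k Z -> u \in P -> w \in P ->
  contr Z Om (a *: u + w) = a * contr Z Om u + contr Z Om w.
Proof.
move=> HZ uP wP; rewrite /contr mulr_sumr -big_split /= big_seq [RHS]big_seq.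
apply: eq_bigr => c cZ; have /andP [/eqP sz Hc] := allP HZ c cZ.
rewrite -!cats1 (FM HOm c.2 [::] a u w) //=; last by rewrite addn0 sz.
ring.
Qed.

Lemma EXTc (Z : mv) : mvec_in P k Z -> exists eta, in_Lperp k.+1 P Om Z eta.
Proof.
move=> HZ; have [xi Hxi] := EXT (U := P) (f := contr Z Om) (fun a u w uP wP => contr_lin a HZ uP wP).
by exists xi; split => // w wP; rewrite Hxi.
Qed.

Section WithS.
Variable (S : {vspace V}).
Hypothesis HS : forall eta, eta \in S -> exists Z, in_Lperp k.+1 P Om Z eta.

Lemma partners (xs : seq V) : in_sub S xs -> exists Zs : seq mv,
  [/\ size Zs = size xs, all (mvec_in P k) Zs &
   forall i, (i < size xs)%N -> forall w, w \in P -> contr (nth [::] Zs i) Om w = dpair (nth 0 xs i) w].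
Proof.
elim: xs => [|x xs IH] H; first by exists [::].
move: H; rewrite in_sub_cons => /andP [xS H].
have [Zs [s a h]] := IH H; have [Z [HZ HZw]] := HS xS.
exists (Z :: Zs); split; first by rewrite /= s.
  by apply/andP; split.
by case=> [|i] /= hi w wP; [exact: HZw | exact: h].
Qed.

Lemma Hsingle (xs : seq V) : in_sub S xs -> size xs = k -> exists v, v \in P /\
  forall us, size us = k -> in_sub P us -> wedge1 k (map (@dpair R n) xs) us = Om (v :: us).
Proof.
move=> H s; have [Zs [sz a h]] := partners H; rewrite s in sz.
have [v [vP Hv]] := HH sz a.
exists v; split => // us su Hu; rewrite -Hv //.
apply: wedge_congr => i j hi hj.
rewrite nth_map_dpair (nth_map [::]) ?sz // h ?s //.
by apply: in_sub_nth => //; rewrite su.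
Qed.

Lemma Hsum (W : mv) : mvec_in S k W -> exists v, v \in P /\
  forall us, size us = k -> in_sub P us ->
    \sum_(c <- W) c.1 * wedge1 k (map (@dpair R n) c.2) us = Om (v :: us).
Proof.
elim: W => [|c W IH] H.
  exists 0; split; first exact: mem0v.
  by move=> us su Hu; rewrite big_nil (F0 HOm [::] us) //= su.
move: H => /andP [/andP [/eqP sc Hc] HW].
have [vc [vcP Hvc]] := Hsingle Hc sc; have [vW [vWP HvW]] := IH HW.
exists (c.1 *: vc + vW); split; first by rewrite memvD ?memvZ.
by move=> us su Hu; rewrite big_cons Hvc // HvW // (FM HOm [::] us) //= su.
Qed.

Lemma K1 (Z : mv) eta (xs : seq V) v : in_Lperp k.+1 P Om Z eta -> v \in P ->
  (forall us, size us = k -> in_sub P us -> wedge1 k (map (@dpair R n) xs) us = Om (v :: us)) ->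
  mpair k Z xs = (-1) ^+ k * dpair eta v.
Proof.
move=> [HZ HZw] vP Hv; rewrite -HZw // /contr /mpair mulr_sumr big_seq [RHS]big_seq.
apply: eq_bigr => c cZ; have /andP [/eqP sc Hc] := allP HZ c cZ.
rewrite (Frot HOm c.2 v) ?sc // Hv //.
by rewrite [RHS]mulrCA [X in _ = c.1 * X]mulrA sign_sq mul1r.
Qed.

Lemma WD (Z1 Z2 : mv) eta (xs : seq V) : in_Lperp k.+1 P Om Z1 eta -> in_Lperp k.+1 P Om Z2 eta ->
  in_sub S xs -> size xs = k -> mpair k Z1 xs = mpair k Z2 xs.
Proof.
move=> H1 H2 Hx sx; have [v [vP Hv]] := Hsingle Hx sx.
by rewrite (K1 H1 vP Hv) (K1 H2 vP Hv).
Qed.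

Hypothesis HS2 : forall Z eta, in_Lperp k.+1 P Om Z eta -> eta \in S.

Lemma RAD (r : V) : r \in P -> (forall xi, xi \in S -> dpair xi r = 0) ->
  forall l, size l = k -> in_sub P l -> Om (r :: l) = 0.
Proof.
move=> rP Hr l sl Hl.
have HZ : mvec_in P k [:: (1, l)] by rewrite /mvec_in /= sl eqxx Hl.
have [eta He] := EXTc HZ.
have := Hr eta (HS2 He); rewrite -He.2 // /contr big_cons big_nil addr0 mul1r /=.
rewrite (Frot HOm l r) ?sl // => /eqP; rewrite mulf_eq0 signr_eq0 /= => /eqP //.
Qed.

Section WithPi.
Variable (Pi : seq V -> R).
Hypothesis HPi : kform_on S k.+1 Pi.
Hypothesis hPi : forall xi (Z : mv), in_Lperp k.+1 P Om Z xi ->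
  forall xs, size xs = k -> in_sub S xs -> Pi (xi :: xs) = mpair k Z xs.

Lemma CA (W : mv) v : mvec_in S k W -> v \in P ->
  (forall us, size us = k -> in_sub P us ->
    \sum_(c <- W) c.1 * wedge1 k (map (@dpair R n) c.2) us = Om (v :: us)) ->
  forall xi, xi \in S -> contr W Pi xi = dpair xi v.
Proof.
move=> HW vP Hv xi xiS; have [Z HZ] := HS xiS.
rewrite -(HZ.2 v vP) /contr.
have E1 : \sum_(c <- W) c.1 * Pi (rcons c.2 xi) = (-1) ^+ k * \sum_(c <- W) c.1 * mpair k Z c.2.
  rewrite mulr_sumr big_seq [RHS]big_seq; apply: eq_bigr => c cW.
  have /andP [/eqP sc Hc] := allP HW c cW.
  by rewrite (Frot HPi c.2 xi) ?sc // (hPi HZ) // mulrCA.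
have E2 : \sum_(c <- W) c.1 * mpair k Z c.2 = \sum_(d <- Z) d.1 * Om (v :: d.2).
  rewrite /mpair; under eq_bigr do rewrite mulr_sumr.
  rewrite exchange_big /= big_seq [RHS]big_seq; apply: eq_bigr => d dZ.
  have /andP [/eqP sd Hd] := allP HZ.1 d dZ.
  rewrite -Hv // mulr_sumr; apply: eq_bigr => c _; by rewrite mulrCA.
rewrite E1 E2 mulr_sumr big_seq [RHS]big_seq; apply: eq_bigr => d dZ.
have /andP [/eqP sd Hd] := allP HZ.1 d dZ.
by rewrite (Frot HOm d.2 v) ?sd // mulrCA.
Qed.

End WithPi.
End WithS.
End Main.



Section Gen.
Variables (R : realType) (n : nat).
Local Notation V := 'rV[R]_n.

Lemma dpairBr (x u w : V) : dpair x (u - w) = dpair x u - dpair x w.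
Proof. by rewrite -[u - w]addrC -scaleN1r dpairDr mulN1r addrC. Qed.

Lemma FAM (S P : {vspace V}) :
  (forall xi, (forall w, w \in P -> dpair xi w = 0) -> xi \in S) ->
  exists B : seq (V * V), (forall b, b \in B -> b.1 \in S /\ b.2 \in P) /\
    (forall u, u \in P -> forall xi, xi \in S ->
      dpair xi (u - \sum_(b <- B) dpair b.1 u *: b.2) = 0).
Proof.
move=> AnnS; set X := vbasis S.
have [e He] : exists e : 'I_(\dim S) -> V, forall a w, dpair (e a) w = coord X a w.
  have HR : forall a, exists x : V, forall w, dpair x w = coord X a w.
    by move=> a; apply: REP => c u w; rewrite linearP.
  have [f Hf] := boolp.choice HR.
  by exists f.
exists [seq (X`_a, projv P (e a)) | a : 'I_(\dim S) <- index_enum 'I_(\dim S)]; split.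
  move=> b /mapP [a _ ->] /=; split; last exact: memv_proj.
  by apply: vbasis_mem; apply: mem_nth; rewrite size_tuple.
move=> u uP xi xiS.
set y := \sum_(a < \dim S) dpair X`_a u *: e a.
have Hy : forall z, z \in S -> dpair z y = dpair z u.
  move=> z zS; rewrite /y (lin_sum (g := dpair z)); last by move=> *; rewrite dpairDr.
  rewrite [in RHS](coord_vbasis zS) (lin_sum (g := fun x => dpair x u)); last by move=> *; rewrite dpairDl.
  by apply: eq_bigr => a _; rewrite (dpairC z) He mulrC.
set w := u - y.
have wP : w \in P.
  apply: DA => z Hz; by rewrite /w dpairBr Hy ?subrr //; apply: AnnS.
have yP : y \in P.
  have -> : y = u - w by rewrite /w opprB addrC subrK.
  by rewrite memvB.
have -> : \sum_(b <- [seq (X`_a, projv P (e a)) | a : 'I_(\dim S) <- index_enum 'I_(\dim S)]) dpair b.1 u *: b.2 = y.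
  rewrite big_map /= -(projv_id yP) /y linear_sum; apply: eq_bigr => a _.
  by rewrite linearZ.
by rewrite dpairBr Hy // subrr.
Qed.

Section Support.
Variables (S P : {vspace V}) (B : seq (V * V)).
Hypothesis HB1 : forall b, b \in B -> b.1 \in S /\ b.2 \in P.
Hypothesis HB2 : forall u, u \in P -> forall xi, xi \in S ->
  dpair xi (u - \sum_(b <- B) dpair b.1 u *: b.2) = 0.

Lemma SUP m : forall G : seq V -> R, kform_on P m G ->
  (forall r rest, r \in P -> (forall xi, xi \in S -> dpair xi r = 0) ->
     (size rest).+1 = m -> in_sub P rest -> G (r :: rest) = 0) ->
  exists W : seq (R * seq V), mvec_in S m W /\ forall us, size us = m -> in_sub P us ->
    \sum_(c <- W) c.1 * wedge1 m (map (@dpair R n) c.2) us = G us.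
Proof.
elim: m => [|m IH] G HG Hrad.
  exists [:: (G [::], [::])]; split; first by [].
  by case=> // _ _; rewrite big_cons big_nil wedge0 mulr1 addr0.
have HGb : forall b, b \in B -> kform_on P m (fun l => G (b.2 :: l)).
  by move=> b bB; apply: kform_shift => //; exact: (HB1 bB).2.
have Hradb : forall b, b \in B -> forall r rest, r \in P -> (forall xi, xi \in S -> dpair xi r = 0) ->
     (size rest).+1 = m -> in_sub P rest -> G (b.2 :: r :: rest) = 0.
  move=> b bB r rest rP Hr sr Hrest.
  have bP := (HB1 bB).2.
  rewrite (Fswap HG [::] rest b.2 r) //=; last by rewrite sr.
  have Hr2 : in_sub P (b.2 :: rest) by rewrite in_sub_cons bP Hrest.
  have s2 : (size (b.2 :: rest)).+1 = m.+1 by rewrite /= sr.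
  by rewrite (Hrad r (b.2 :: rest) rP Hr s2 Hr2) oppr0.
have [Wf HWf] : exists Wf : V * V -> seq (R * seq V), forall b, b \in B ->
    mvec_in S m (Wf b) /\ forall us, size us = m -> in_sub P us ->
    \sum_(c <- Wf b) c.1 * wedge1 m (map (@dpair R n) c.2) us = G (b.2 :: us).
  have HW : forall b, exists W, b \in B -> mvec_in S m W /\ forall us, size us = m -> in_sub P us ->
    \sum_(c <- W) c.1 * wedge1 m (map (@dpair R n) c.2) us = G (b.2 :: us).
    move=> b; case: (boolP (b \in B)) => bB.
      by have [W HW] := IH _ (HGb b bB) (Hradb b bB); exists W => _.
    by exists [::] => h; discriminate h.
  have [f Hf] := boolp.choice HW.
  by exists f.
pose W := flatten [seq [seq (c.1 / m.+1%:R, b.1 :: c.2) | c <- Wf b] | b <- B].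
exists W; split.
  apply/allP => c /flatten_mapP [b bB /mapP [c' c'W ->]] /=.
  have /andP [/eqP sc Hc] := allP (HWf b bB).1 c' c'W.
  apply/andP; split; first by rewrite /= sc.
  by move: Hc; rewrite /in_sub /= (HB1 bB).1.
move=> us su Hu.
have Hexp : forall j, (j < m.+1)%N ->
    G (nth 0 us j :: (take j us ++ drop j.+1 us)) =
    \sum_(b <- B) dpair b.1 (nth 0 us j) *
      \sum_(c <- Wf b) c.1 * wedge1 m (map (@dpair R n) c.2) (take j us ++ drop j.+1 us).
  move=> j hj; set u := nth 0 us j; set rest := take j us ++ drop j.+1 us.
  have uP : u \in P by apply: in_sub_nth; rewrite ?su.
  have sr : size rest = m by rewrite /rest size_dn su.
  have Hr : in_sub P rest by apply: in_sub_dn.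
  have sP : \sum_(b <- B) dpair b.1 u *: b.2 \in P.
    by rewrite big_seq; apply: memv_suml => b bB; apply: memvZ; exact: (HB1 bB).2.
  have dP : u - \sum_(b <- B) dpair b.1 u *: b.2 \in P by rewrite memvB.
  have Hdec : u = \sum_(b <- B) dpair b.1 u *: b.2 + (u - \sum_(b <- B) dpair b.1 u *: b.2).
    by rewrite addrC subrK.
  rewrite [in LHS]Hdec (FD HG [::] rest) //=; last by rewrite sr.
  have s1 : (size rest).+1 = m.+1 by rewrite sr.
  rewrite (Hrad _ rest dP _ s1 Hr) ?addr0; last by move=> xi xiS; apply: HB2.
  rewrite (Fsum0 HG B (fun b => dpair b.1 u) (fun b => b.2) rest s1 Hr (fun b bB => (HB1 bB).2)).
  by apply: eq_big_seq => b bB; rewrite (HWf b bB).2.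
have E : forall j : 'I_m.+1, (-1) ^+ j * G (nth 0 us j :: (take j us ++ drop j.+1 us)) = G us.
  move=> j; have hj : (j < size us)%N by rewrite su.
  have Eus : take j us ++ nth 0 us j :: drop j.+1 us = us by rewrite -drop_nth ?cat_take_drop.
  rewrite -[in RHS]Eus (Ffront HG (take j us) (nth 0 us j) (drop j.+1 us)).
  - by rewrite size_takel ?(ltnW hj).
  - by rewrite size_takel ?(ltnW hj) // size_drop su; lia.
  - by apply/allP => x hx; apply: (allP Hu); exact: mem_take hx.
  - by apply: in_sub_nth.
  - by apply/allP => x hx; apply: (allP Hu); exact: mem_drop hx.
have GE : G us = (m.+1%:R)^-1 * \sum_(j < m.+1) (-1) ^+ j * G (nth 0 us j :: (take j us ++ drop j.+1 us)).
  rewrite (eq_bigr _ (fun j _ => E j)) sumr_const card_ord -[G us *+ _]mulr_natl mulrA mulVf ?mul1r //.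
  by rewrite pnatr_eq0.
rewrite GE.
rewrite [in RHS](eq_bigr _ (fun (j : 'I_m.+1) _ => congr1 (fun x => (-1) ^+ j * x) (Hexp j (ltn_ord j)))).
rewrite /W big_flatten big_map.
under eq_bigr => b _ do rewrite big_map.
under eq_bigr => b _ do under eq_bigr => c _ do rewrite /= wedge_laplace mulr_sumr.
under eq_bigr => b _ do rewrite exchange_big /=.
rewrite exchange_big /= mulr_sumr; apply: eq_bigr => j _.
rewrite [RHS]mulrA [RHS]mulr_sumr; apply: eq_bigr => b _.
rewrite [RHS]mulrA [RHS]mulr_sumr; apply: eq_bigr => c _.
rewrite /=; ring.
Qed.

End Support.

Lemma uniq_assoc k (P : {vspace V}) Om (S S' : {vspace V}) Pi Pi' :
  assoc k.+1 P Om S Pi -> assoc k.+1 P Om S' Pi' -> S = S' /\ eq_on S k.+1 Pi Pi'.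
Proof.
move=> [H1 h1] [H2 h2].
have SS : S = S'.
  by apply/vspaceP => x; apply/idP/idP => hx; [apply/H2; apply/H1 | apply/H1; apply/H2].
split => //; case=> [|eta xs] //= s Hv.
move: Hv => /andP [eS Hx].
have [Z HZ] := (H1 eta).1 eS.
case: s => s.
by rewrite (h1 _ _ HZ) ?(h2 _ _ HZ) // -SS.
Qed.

Lemma assoc_eq k (U : {vspace V}) (F F' : seq V -> R) (X : {vspace V}) G :
  eq_on U k.+1 F F' -> assoc k.+1 U F' X G -> assoc k.+1 U F X G.
Proof.
move=> E [H1 h1].
have L : forall W v, in_Lperp k.+1 U F W v <-> in_Lperp k.+1 U F' W v.
  move=> W v; rewrite /in_Lperp.
  have C : mvec_in U k.+1.-1 W -> forall w, w \in U -> contr W F w = contr W F' w.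
    move=> HW w wU; rewrite /contr big_seq [RHS]big_seq; apply: eq_bigr => c cW.
    have /andP [/eqP sc Hc] := allP HW c cW.
    congr (_ * _); apply: E.
      by rewrite size_rcons sc.
    by rewrite in_sub_rcons wU.
  split=> [[HW HWw]|[HW HWw]]; split => // w wU.
    by rewrite -(C HW w wU); apply: HWw.
  by rewrite (C HW w wU); apply: HWw.
split.
  by move=> v; rewrite H1; split => [[W HW]|[W HW]]; exists W; apply/L.
by move=> W v /L HL; apply: h1.
Qed.

End Gen.



Section Main2.
Variables (R : realType) (n k : nat).
Local Notation V := 'rV[R]_n.
Variables (P : {vspace V}) (Om : seq V -> R).
Hypothesis HOm : kform_on P k.+1 Om.
Hypothesis HH : condH k.+1 P Om.

Lemma part1 : exists S Pi, dual_pair k.+1 S Pi /\ assoc k.+1 P Om S Pi.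
Proof.
have Q0 : exists Z, in_Lperp k.+1 P Om Z 0.
  by exists [::]; split => // w wP; rewrite /contr big_nil dpair0l.
have Qc : forall a u w, (exists Z, in_Lperp k.+1 P Om Z u) -> (exists Z, in_Lperp k.+1 P Om Z w) ->
    exists Z, in_Lperp k.+1 P Om Z (a *: u + w).
  move=> a u w [Z1 [H1 H1w]] [Z2 [H2 H2w]].
  exists ([seq (a * c.1, c.2) | c <- Z1] ++ Z2); split.
    by rewrite mvec_in_cat mvec_in_scale H1 H2.
  by move=> x xP; rewrite contr_cat contr_scale H1w // H2w // dpairDl.
have [S HSi] := VSP (Q := fun eta => exists Z, in_Lperp k.+1 P Om Z eta) Q0 Qc.
have HS : forall eta, eta \in S -> exists Z, in_Lperp k.+1 P Om Z eta := fun eta h => (HSi eta).1 h.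
have HS2 : forall Z eta, in_Lperp k.+1 P Om Z eta -> eta \in S :=
  fun Z eta h => (HSi eta).2 (ex_intro _ Z h).
have [Fz HFz] : exists Fz : V -> seq (R * seq V), forall eta, eta \in S -> in_Lperp k.+1 P Om (Fz eta) eta.
  have HF : forall eta, exists Z : seq (R * seq V), eta \in S -> in_Lperp k.+1 P Om Z eta.
    move=> eta; case: (boolP (eta \in S)) => h; last by exists [::] => h'; discriminate h'.
    by have [Z HZ] := HS eta h; exists Z.
  by have [f Hf] := boolp.choice HF; exists f.
have [Pi0 Pi0E] : exists Pi0 : seq V -> R, forall eta xs, Pi0 (eta :: xs) = mpair k (Fz eta) xs.
  by exists (fun vs => if vs is eta :: xs then mpair k (Fz eta) xs else 0).
have hPi0 : forall xi Z, in_Lperp k.+1 P Om Z xi -> forall xs, size xs = k -> in_sub S xs ->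
    Pi0 (xi :: xs) = mpair k Z xs.
  move=> xi Z HZ xs sx Hx; rewrite Pi0E.
  exact: (WD HOm HH HS (HFz xi (HS2 _ _ HZ)) HZ Hx sx).
have HPi0 : kform_on S k.+1 Pi0.
  split.
  - move=> l r a u w s Hl Hr uS wS; case: l s Hl => [|eta l'] s Hl.
    + have sr : size r = k by move: s => /=; lia.
      have [v [vP Hv]] := Hsingle HH HS Hr sr.
      have auwS : a *: u + w \in S by rewrite memvD ?memvZ.
      rewrite /= !Pi0E (K1 HOm (HFz _ auwS) vP Hv) (K1 HOm (HFz _ uS) vP Hv) (K1 HOm (HFz _ wS) vP Hv).
      rewrite dpairDl; ring.
    + rewrite /= !Pi0E /mpair mulr_sumr -big_split /=; apply: eq_bigr => c _.
      rewrite !map_cat /= (wedge_lin (fs1 := map (@dpair R n) l')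
        (f := dpair u) (g := dpair w) (h := dpair (a *: u + w)) (a := a) (map (@dpair R n) r) c.2).
      * ring.
      * by rewrite size_map; move: s => /=; lia.
      * by move=> x; rewrite dpairDl.
  - move=> vs s Hv i j /andP [ij jp] e.
    case: vs s Hv e => [|eta xs] // s Hv e.
    have sx : size xs = k by case: s.
    move: Hv; rewrite in_sub_cons => /andP [etaS Hx].
    rewrite Pi0E.
    case: i ij e => [|i] ij e.
    + case: j ij jp e => [|j] // _ jp e.
      rewrite /= in e.
      have [v [vP Hv]] := Hsingle HH HS Hx sx.
      rewrite (K1 HOm (HFz _ etaS) vP Hv).
      set d := dpair eta v.
      have Hd : forall c2, size c2 = k -> in_sub P c2 -> d * Om (v :: c2) = 0.
        move=> c2 sc Hc; rewrite -Hv //.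
        have Z0 : wedge1 k.+1 (dpair eta :: map (@dpair R n) xs) (v :: c2) = 0.
          apply: (@wedge_alt _ _ k.+1 _ _ ord0 (Ordinal jp)) => // x /=.
          by rewrite nth_map_dpair -e.
        move: Z0; rewrite wedge_laplace big_ord_recl big1 ?addr0; last first.
          move=> j' _; rewrite lift0 /=.
          have hj : (j' < size c2)%N by rewrite sc.
          have k0 : (0 < k)%N by apply: leq_ltn_trans (ltn_ord j').
          set rest := take j' c2 ++ drop j'.+1 c2.
          have sr : size rest = k.-1 by rewrite /rest size_dn // sc.
          have Hrest : in_sub P rest by apply: in_sub_dn.
          have s1 : size (v :: rest) = k by rewrite /= sr prednK.
          have H1 : in_sub P (v :: rest) by rewrite in_sub_cons vP Hrest.
          have s2 : (size (Nil V) + size rest).+2 = k.+1 by rewrite /= sr prednK.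
          by rewrite (Hv _ s1 H1) (Falt2 HOm [::] rest v s2) ?mulr0.
        by rewrite /= expr0 mul1r drop0.
      have Hdd : d * d = 0.
        have [HZ HZw] := HFz _ etaS.
        rewrite {2}/d -HZw // /contr mulr_sumr big_seq big1 // => c cZ.
        have /andP [/eqP sc Hc] := allP HZ c cZ.
        rewrite (Frot HOm c.2 v) ?sc //.
        have -> : d * (c.1 * ((-1) ^+ k.+1.-1 * Om (v :: c.2))) =
                  c.1 * (-1) ^+ k.+1.-1 * (d * Om (v :: c.2)) by ring.
        by rewrite Hd ?mulr0.
      by move/eqP: Hdd; rewrite mulf_eq0 orbb => /eqP Hd0; rewrite Hd0 mulr0.
    + case: j ij jp e => [|j] // ij jp e.
      rewrite /= in e; rewrite ltnS in ij jp.
      rewrite /mpair big1 // => c _.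
      have hi : (i < k)%N by lia.
      have hj' : (j < k)%N by lia.
      rewrite (@wedge_alt _ _ k (map (@dpair R n) xs) c.2 (Ordinal hi) (Ordinal hj')) ?mulr0 //.
        by apply/eqP => /(congr1 val) /= eij; lia.
      by move=> x; rewrite !nth_map_dpair e.
have HH' : condH' k.+1 S Pi0.
  move=> ws sw Hws.
  have [vs [svs Hvs hvs]] : exists vs : seq V, [/\ size vs = size ws, in_sub P vs &
      forall i, (i < size ws)%N -> forall xi, xi \in S ->
        contr (nth [::] ws i) Pi0 xi = dpair xi (nth 0 vs i)].
    elim: ws {sw} Hws => [|w ws' IH] H; first by exists [::].
    move: H => /andP [Hw H]; have [vs [s1 a1 h1]] := IH H.
    have [v [vP Hv]] := Hsum HOm HH HS Hw.
    exists (v :: vs); split; first by rewrite /= s1.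
      by rewrite in_sub_cons vP a1.
    case=> [|i] /= hi xi xiS; last exact: h1.
    have HC := CA HOm HS HPi0 hPi0 Hw vP Hv xiS.
    exact HC.
  have HZ : mvec_in P k [:: (1, vs)].
    by rewrite /mvec_in /= andbT svs sw eqxx.
  have [eta He] := EXTc HOm HZ.
  exists eta; split; first exact: HS2 He.
  move=> xs sx Hx.
  pose proof (hPi0 eta [:: (1, vs)] He xs sx Hx) as E1.
  rewrite E1 /mpair big_cons big_nil addr0 mul1r.
  rewrite -wedge_tr; apply: wedge_congr => a b ha hb.
  have xbS : nth 0 xs b \in S by apply: in_sub_nth => //; rewrite sx.
  by rewrite nth_map_dpair (nth_map [::]) ?sw // hvs ?sw // dpairC.
exists S, Pi0; split; first by split.
by split; [exact: HSi | move=> Z eta HZ; exact: hPi0 HZ].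
Qed.

Lemma partC (S : {vspace V}) (Pi : seq V -> R) :
  assoc k.+1 P Om S Pi -> kform_on S k.+1 Pi -> assoc k.+1 S Pi P Om.
Proof.
move=> [HSi hPi] HPi.
have HS : forall eta, eta \in S -> exists Z, in_Lperp k.+1 P Om Z eta := fun eta h => (HSi eta).1 h.
have HS2 : forall Z eta, in_Lperp k.+1 P Om Z eta -> eta \in S :=
  fun Z eta h => (HSi eta).2 (ex_intro _ Z h).
have AnnS : forall xi, (forall w, w \in P -> dpair xi w = 0) -> xi \in S.
  move=> xi H; apply: (HS2 [::]); split => // w wP; by rewrite /contr big_nil H.
have Hsep : forall x, (forall xi, xi \in S -> dpair xi x = 0) -> x \in P.
  by move=> x H; apply: DA => xi Hxi; apply: H; apply: AnnS.
have hPi' : forall xi Z, in_Lperp k.+1 P Om Z xi -> forall xs, size xs = k -> in_sub S xs ->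
    Pi (xi :: xs) = mpair k Z xs by move=> xi Z HZ xs sx Hx; exact: hPi HZ xs sx Hx.
have Hdiff : forall (W : seq (R * seq V)) v vW, mvec_in S k W -> vW \in P ->
    (forall us, size us = k -> in_sub P us ->
      \sum_(c <- W) c.1 * wedge1 k (map (@dpair R n) c.2) us = Om (vW :: us)) ->
    (forall xi, xi \in S -> contr W Pi xi = dpair v xi) ->
    forall xi, xi \in S -> dpair xi (v - vW) = 0.
  move=> W v vW HW vWP HvW Hv xi xiS.
  by rewrite dpairBr -(CA HOm HS HPi hPi' HW vWP HvW xiS) Hv // dpairC subrr.
have Hi : forall v, v \in P <-> exists W, in_Lperp k.+1 S Pi W v.
  move=> v; split.
    move=> vP; have [B [HB1 HB2]] := FAM AnnS.
    have Hrad : forall r rest, r \in P -> (forall xi, xi \in S -> dpair xi r = 0) ->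
        (size rest).+1 = k -> in_sub P rest -> Om (v :: r :: rest) = 0.
      move=> r rest rP Hr sr Hrest.
      have s2 : (size (Nil V) + size rest).+2 = k.+1 by rewrite /= sr.
      have H1 : in_sub P (v :: rest) by rewrite in_sub_cons vP Hrest.
      rewrite (Fswap HOm [::] rest v r s2) //=.
      by rewrite (RAD HOm HS2 rP Hr (l := v :: rest)) ?oppr0.
    have [W [HW HWv]] := SUP HB1 HB2 (kform_shift HOm vP) Hrad.
    exists W; split => // xi xiS.
    by rewrite (CA HOm HS HPi hPi' HW vP HWv xiS) dpairC.
  move=> [W [HW HWv]].
  have [vW [vWP HvW]] := Hsum HOm HH HS HW.
  have dP := Hsep _ (Hdiff W v vW HW vWP HvW HWv).
  by rewrite -(subrK vW v) memvD.
split=> // W v HL us su Hu.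
have vP : v \in P by apply/Hi; exists W.
have [vW [vWP HvW]] := Hsum HOm HH HS HL.1.
have E := Hdiff W v vW HL.1 vWP HvW HL.2.
have Z0 : Om ((v - vW) :: us) = 0 by apply: (RAD HOm HS2 _ E) => //; rewrite memvB.
have : Om (((-1) *: vW + v) :: us) = - Om (vW :: us) + Om (v :: us).
  by rewrite (FM HOm [::] us (-1) vW v) //= ?su // mulN1r.
rewrite scaleN1r addrC Z0 => /eqP; rewrite eq_sym addrC subr_eq0 => /eqP ->.
rewrite /mpair -HvW //; apply: eq_bigr => c _; by rewrite wedge_tr.
Qed.

End Main2.

Unset Implicit Arguments.

Theorem proposition4p5 (R : realType) (n p : nat) :
  (2 <= p <= n)%N ->
  (* the assignment is defined on Dirac structures and lands in pairs with (H') *)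
  (forall (P : {vspace 'rV[R]_n}) (Om : seq 'rV[R]_n -> R),
     linear_dirac p P Om ->
     exists (S : {vspace 'rV[R]_n}) (Pi : seq 'rV[R]_n -> R),
       dual_pair p S Pi /\ assoc p P Om S Pi) /\
  (* it is well defined (the assigned pair is unique) *)
  (forall (P : {vspace 'rV[R]_n}) (Om : seq 'rV[R]_n -> R)
          (S S' : {vspace 'rV[R]_n}) (Pi Pi' : seq 'rV[R]_n -> R),
     linear_dirac p P Om -> assoc p P Om S Pi -> assoc p P Om S' Pi' ->
     S = S' /\ eq_on S p Pi Pi') /\
  (* it is injective *)
  (forall (P P' : {vspace 'rV[R]_n}) (Om Om' : seq 'rV[R]_n -> R)
          (S : {vspace 'rV[R]_n}) (Pi Pi' : seq 'rV[R]_n -> R),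
     linear_dirac p P Om -> linear_dirac p P' Om' ->
     assoc p P Om S Pi -> assoc p P' Om' S Pi' -> eq_on S p Pi Pi' ->
     P = P' /\ eq_on P p Om Om') /\
  (* it is surjective *)
  (forall (S : {vspace 'rV[R]_n}) (Pi : seq 'rV[R]_n -> R),
     dual_pair p S Pi ->
     exists (P : {vspace 'rV[R]_n}) (Om : seq 'rV[R]_n -> R),
       linear_dirac p P Om /\ assoc p P Om S Pi).
Proof.
case: p => [|k] // /andP [hp _].
have P1 : forall (P : {vspace 'rV[R]_n}) (Om : seq 'rV[R]_n -> R), linear_dirac k.+1 P Om ->
    exists S Pi, dual_pair k.+1 S Pi /\ assoc k.+1 P Om S Pi.
  by move=> P Om [HOm HH]; exact: part1 HOm HH.
have KF : forall (P : {vspace 'rV[R]_n}) (Om : seq 'rV[R]_n -> R) S Pi,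
    linear_dirac k.+1 P Om -> assoc k.+1 P Om S Pi -> kform_on S k.+1 Pi.
  move=> P Om S Pi HD A.
  have [S0 [Pi0 [[HPi0 _] A0]]] := P1 P Om HD.
  have [SS EP] := uniq_assoc A0 A.
  move: HPi0 EP; rewrite SS => HPi0 EP; exact: kform_eq HPi0 EP.
split; first exact: P1.
split; first by move=> P Om S S' Pi Pi' _ H1 H2; exact: uniq_assoc H1 H2.
split.
  move=> P P' Om Om' S Pi Pi' HD HD' A1 A2 E.
  have C1 := partC HD.1 HD.2 A1 (KF _ _ _ _ HD A1).
  have C2 := partC HD'.1 HD'.2 A2 (KF _ _ _ _ HD' A2).
  have C2' := assoc_eq E C2.
  exact: uniq_assoc C1 C2'.
move=> S Pi [HPi HH'].
have HH : condH k.+1 S Pi := HH'.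
have [P [Om [[HOm HHo] A]]] := P1 S Pi (conj HPi HH).
exists P, Om; split; first by split.
have HC := partC HPi HH A HOm.
exact HC.
Qed.
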